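(* Consider a graph $G=(V, E)$ that has no isolated vertices and where each node has a $b$-bit identifier. There is a deterministic distributed algorithm in the $\mathsf{CONGEST}$ model that, in $O(\log^* b)$ rounds, colors the vertices of $V$ blue or red such that each color has at most $3|V|/4$ vertices.
   Context: Identifiers are unique. $\mathsf{CONGEST}$ model: synchronous rounds on the network $G$, per round each node sends one message of $O(b)$ bits (the identifier length) to each neighbor; nodes initially know only local information, and at the end each node knows its own color. $\log^*$ denotes the iterated logarithm. *)

(* Defs.v *)
From mathcomp Require Import all_boot.
Set Implicit Arguments. Unset Strict Implicit. Unset Printing Implicit Defensive.

(* Nodes initially know only their identifier and their degree; the
   algorithm is parameterised by the identifier length b (given separately,
   as a function b |-> algorithm).  Port i of node v leads to the i-th
   neighbour of v in [nbrs e v] (an arbitrary, adversarial order).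
   - ca_init id deg   : initial local state
   - ca_send s p      : message (a natural number, i.e. a bit string) sent
                        through port p in a round when the state is s
   - ca_recv s ms     : new state after receiving ms (ms`_p from port p)
   - ca_out s         : final colour (true = blue, false = red)
   - ca_rounds        : number of synchronous rounds executed. *)
Record congest_algo := CongestAlgo {
  ca_St : Type;
  ca_rounds : nat;
  ca_init : nat -> nat -> ca_St;
  ca_send : ca_St -> nat -> nat;
  ca_recv : ca_St -> seq nat -> ca_St;
  ca_out : ca_St -> bool }.

Definition nbrs (T : finType) (e : rel T) (v : T) : seq T :=
  [seq u <- enum T | e v u].

Fixpoint exec (A : congest_algo) (T : finType) (e : rel T) (id : T -> nat)
    (r : nat) : T -> ca_St A :=
  match r with
  | 0 => fun v => ca_init A (id v) (size (nbrs e v))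
  | r'.+1 => fun v =>
      ca_recv (exec A e id r' v)
        [seq ca_send (exec A e id r' u) (index v (nbrs e u)) | u <- nbrs e v]
  end.

Definition color_of (A : congest_algo) (T : finType) (e : rel T)
    (id : T -> nat) (v : T) : bool :=
  ca_out (exec A e id (ca_rounds A) v).

Definition bandwidth_ok (A : congest_algo) (T : finType) (e : rel T)
    (id : T -> nat) (bits : nat) : Prop :=
  forall r u v, r < ca_rounds A -> e u v ->
    ca_send (exec A e id r u) (index v (nbrs e u)) < 2 ^ bits.

Fixpoint log_star_fuel (fuel n : nat) : nat :=
  match fuel with
  | 0 => 0
  | f.+1 => if n <= 1 then 0 else (log_star_fuel f (trunc_log 2 n)).+1
  end.
Definition log_star (n : nat) : nat := log_star_fuel n n.

(* Main.v *)
Require Import Defs.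
From mathcomp Require Import all_boot zify.
Set Implicit Arguments. Unset Strict Implicit. Unset Printing Implicit Defensive.

Fixpoint cvs (f a b : nat) : nat :=
  match f with
  | 0 => 0
  | f'.+1 => if odd a != odd b then nat_of_bool (odd a) else (cvs f' a./2 b./2).+2
  end.

Lemma half_split a : a = odd a + (a./2) * 2.
Proof. by rewrite muln2 odd_double_half. Qed.

Lemma cvs_neq f1 f2 a b c : a != b -> b != c -> a + b <= f1 -> b + c <= f2 ->
  cvs f1 a b != cvs f2 b c.
Proof.
elim: f1 f2 a b c => [|f1 IH] [|f2] a b c ab bc h1 h2.
- by exfalso; move/eqP: ab; lia.
- by exfalso; move/eqP: ab; lia.
- by exfalso; move/eqP: bc; lia.
rewrite /=.
have ea := half_split a; have eb := half_split b; have ec := half_split c.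
case oa: (odd a); case ob: (odd b); case oc: (odd c) => //=;
  rewrite ?oa ?ob ?oc in ea eb ec; try (apply: IH; lia).
Qed.

Lemma cvs_bound f B a b : a <= B -> b <= B -> a != b -> a + b <= f ->
  cvs f a b <= (trunc_log 2 B).*2.+1.
Proof.
elim: f B a b => [|f IH] B a b aB bB ab h; first by [].
rewrite /=.
have ea := half_split a; have eb := half_split b.
case: ifP => [_|]; first by case: (odd a).
move/negbFE/eqP => oab.
have B2 : 1 < B.
  move: ea eb; rewrite -oab; case: (odd a) => /= ea eb; lia.
rewrite (trunc_log2S B2) doubleS !ltnS.
apply: IH.
- move: aB; rewrite {1}(half_split B); lia.
- move: bB; rewrite {1}(half_split B); lia.
- apply/eqP => e; move/eqP: ab; apply; rewrite ea eb e oab //.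
- move: ea eb; rewrite -oab; case: (odd a) => /= ea eb; lia.
Qed.
Definition hb (n : nat) := (trunc_log 2 n).*2.+1.

Lemma tl_le k j : k < 2 ^ j.+1 -> trunc_log 2 k <= j.
Proof.
move=> h; case: k h => [|k] h; first by rewrite trunc_log0.
rewrite leqNgt; apply/negP => lt.
have := trunc_logP (isT : 1 < 2) (isT : 0 < k.+1).
have : 2 ^ j.+1 <= 2 ^ trunc_log 2 k.+1 by rewrite leq_exp2l.
lia.
Qed.

Lemma hb_mono m n : m <= n -> hb m <= hb n.
Proof. by move=> h; rewrite /hb ltnS leq_double leq_trunc_log. Qed.

Lemma hb_key n : hb (n.*2 + 13) <= (trunc_log 2 n).*2 + 13.
Proof.
rewrite /hb.
case: n => [|n]; first by [].
have h1 := trunc_log_ltn n.+1 (isT : 1 < 2).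
have : trunc_log 2 (n.+1.*2 + 13) <= (trunc_log 2 n.+1) + 4.
  apply: tl_le; rewrite -(addnS (trunc_log 2 n.+1) 4) expnD.
  move: h1; rewrite expnS -!muln2; lia.
rewrite -!muln2; lia.
Qed.

Lemma hb_le n : 5 <= n -> hb n <= n /\ 5 <= hb n.
Proof.
move=> h; rewrite /hb; split.
- have := trunc_logP (isT : 1 < 2) (leq_trans (isT : 0 < 5) h).
  set k := trunc_log 2 n.
  case: k => [|[|[|k]]] /=; try lia.
  move=> hk; apply: leq_trans hk.
  elim: k => [|k IH]; first by [].
  rewrite expnS; lia.
- have : 2 <= trunc_log 2 n by apply: trunc_log_max => //; apply: leq_trans h.
  lia.
Qed.

Lemma tl_lt n : 1 < n -> trunc_log 2 n < n.
Proof.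
move=> h; have := trunc_logP (isT : 1 < 2) (ltnW h).
move=> h2; apply: leq_trans h2; exact: ltn_expl.
Qed.

Lemma lsf_iter f n : n <= f -> iter (log_star_fuel f n) (trunc_log 2) n <= 1.
Proof.
elim: f n => [|f IH] n h /=; first by lia.
case: ifP => // /negbT; rewrite -ltnNge => n1.
rewrite iterSr; apply: IH.
have := tl_lt n1; lia.
Qed.

Definition Bnd b t := iter t hb (2 ^ b + 5).

Lemma Bnd_le b t : Bnd b t <= 2 ^ b + 5 /\ 5 <= Bnd b t.
Proof.
elim: t => [|t [IH1 IH2]] /=; first by rewrite /Bnd /=; lia.
rewrite /Bnd /= -/(Bnd b t).
have [h1 h2] := hb_le IH2; split => //; exact: leq_trans h1 IH1.
Qed.

Lemma Bnd_log b t : Bnd b t.+1 <= (iter t (trunc_log 2) b).*2 + 13.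
Proof.
elim: t => [|t IH].
  rewrite /Bnd /= /hb.
  have : trunc_log 2 (2 ^ b + 5) <= b + 3.
    apply: tl_le; rewrite -(addnS b 3) expnD.
    have : 0 < 2 ^ b by rewrite expn_gt0.
    lia.
  lia.
rewrite /Bnd iterS -/(Bnd b t.+1) iterS.
apply: leq_trans (hb_mono IH) _; exact: hb_key.
Qed.

Definition Lcv b := (log_star b).+3.

Lemma Bnd_final b : Bnd b (Lcv b) <= 5.
Proof.
rewrite /Lcv /Bnd !iterS -/(Bnd b (log_star b).+1).
have h := Bnd_log b (log_star b).
have h2 := lsf_iter (leqnn b).
have h3 : Bnd b (log_star b).+1 <= 15.
  apply: leq_trans h _. rewrite /log_star in h2 *. lia.
have := hb_mono h3; rewrite [hb 15]/hb.
have -> : trunc_log 2 15 = 3 by [].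
move=> h4; have := hb_mono h4.
by rewrite [hb 7]/hb; have -> : trunc_log 2 7 = 2 by [].
Qed.
Lemma count3 (T : finType) (P Q : {set T}) (g : T -> T) :
  (forall v, v \in P -> g v \in Q) ->
  (forall x, #|[set v in P | g v == x]| <= 3) ->
  #|P| <= 3 * #|Q|.
Proof.
move=> PQ hx.
rewrite -sum1_card (partition_big g (fun j => j \in Q)) //=.
rewrite mulnC -sum_nat_const; apply: leq_sum => x Qx.
rewrite (eq_bigl (fun i => i \in [set v in P | g v == x])) ?sum1_card //.
by move=> i; rewrite inE.
Qed.


Record St := mkSt { rnd : nat; flags : seq nat; sflag : bool; myodd : bool;
  parO : bool; parodd : bool; colf : nat; inIf : bool }.

Definition upb (s : St) := ~~ sflag s && parO s.
Definition downb (s : St) := ~~ sflag s && (count (pred1 1) (flags s) == 1).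

Definition a_send (L : nat) (s : St) (q : nat) : nat :=
  match rnd s with
  | 0 => nat_of_bool (q == 0)
  | 1 => nat_of_bool (1 < count (pred1 1) (flags s))
          + (nat_of_bool (odd (count (pred1 1) (take q (flags s))))).*2
  | 2 => nat_of_bool (~~ sflag s) + (nat_of_bool (myodd s)).*2
  | r.+3 => if r < L then colf s else nat_of_bool (inIf s)
  end.

Definition a_recv (L : nat) (s : St) (ms : seq nat) : St :=
  let m0 := nth 0 ms 0 in
  match rnd s with
  | 0 => mkSt 1 ms false false false false (colf s) (inIf s)
  | 1 => mkSt 2 (flags s) (odd m0) (odd m0./2) false false (colf s) (inIf s)
  | 2 => mkSt 3 (flags s) (sflag s) (myodd s) (odd m0) (odd m0./2) (colf s) (inIf s)
  | r.+3 => if r < L then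
        mkSt r.+4 (flags s) (sflag s) (myodd s) (parO s) (parodd s)
          (cvs (colf s + m0) (colf s) m0) (inIf s)
      else
        mkSt r.+4 (flags s) (sflag s) (myodd s) (parO s) (parodd s) (colf s)
          (inIf s || [&& colf s == r - L, upb s || downb s,
             ~~ (upb s && (m0 == 1)) &
             ~~ (downb s && (nth 0 ms (index 1 (flags s)) == 1))])
  end.

Definition a_out (s : St) : bool :=
  if sflag s then myodd s else if upb s || downb s then inIf s else ~~ parodd s.

Definition alg (b : nat) : congest_algo :=
  CongestAlgo (Lcv b + 9) (fun i _ => mkSt 0 [::] false false false false i false)
    (a_send (Lcv b)) (a_recv (Lcv b)) a_out.

Section Graph.
Variables (T : finType) (e : rel T) (id : T -> nat) (b : nat).
Hypotheses (esym : symmetric e) (eirr : irreflexive e)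
  (enz : forall v : T, exists u : T, e v u) (idinj : injective id)
  (idb : forall v, id v < 2 ^ b).

Definition nb v := nbrs e v.
Definition par v := head v (nb v).
Definition children x := [seq u <- nb x | par u == x].
Definition K x := size (children x).
Definition Sn v := 1 < K (par v).
Definition rank v := index v (children (par v)).
Definition child v := nth v (nb v) (find (fun u => par u == v) (nb v)).
Definition up v := ~~ Sn v && ~~ Sn (par v).
Definition down v := ~~ Sn v && (K v == 1).

Lemma mem_nb v u : (u \in nb v) = e v u.
Proof. by rewrite /nb /nbrs mem_filter mem_enum andbT. Qed.

Lemma e_par v : e v (par v).
Proof.
have [u hu] := enz v; rewrite -mem_nb in hu; rewrite -mem_nb /par.
by case: (nb v) hu => //= w s _; rewrite inE eqxx.
Qed.

Lemma par_neq v : par v != v.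
Proof. apply/eqP => h; have := e_par v; by rewrite h eirr. Qed.

Lemma mem_children u x : (u \in children x) = (par u == x).
Proof.
rewrite /children mem_filter mem_nb; case: eqP => //= <-.
by rewrite esym e_par.
Qed.

Lemma uniq_children x : uniq (children x).
Proof. by rewrite /children filter_uniq // /nb /nbrs filter_uniq // enum_uniq. Qed.

Lemma par_children v : v \in children (par v).
Proof. by rewrite mem_children. Qed.

Lemma K_pos v : 0 < K (par v).
Proof. rewrite /K; case: (children (par v)) (par_children v) => //. Qed.

Lemma O_K v : ~~ Sn v -> K (par v) = 1.
Proof. rewrite /Sn => h; have := K_pos v; lia. Qed.

Lemma child_mem x : 0 < K x -> child x \in children x.
Proof.
rewrite /K => h; rewrite mem_children /child.
apply: (nth_find x (a := fun u => par u == x)); by rewrite has_count -size_filter.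
Qed.

Lemma only_child x v : K x = 1 -> par v = x -> v = child x.
Proof.
move=> k1 pv.
have h1 : v \in children x by rewrite mem_children pv.
have h2 : child x \in children x by apply: child_mem; rewrite k1.
move: k1 h1 h2; rewrite /K; case: (children x) => [|w [|]] //= _.
by rewrite !inE => /eqP -> /eqP ->.
Qed.

Lemma down_child v : down v -> par (child v) = v /\ ~~ Sn (child v) /\ up (child v).
Proof.
case/andP=> Ov /eqP Kv.
have hp : par (child v) = v by apply/eqP; rewrite -mem_children; apply: child_mem; rewrite Kv.
have Oc : ~~ Sn (child v) by rewrite /Sn hp Kv.
by split=> //; split=> //; rewrite /up Oc hp Ov.
Qed.

Lemma up_par v : up v -> down (par v) /\ child (par v) = v.
Proof.
case/andP=> Ov Op.
have k := O_K Ov.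
by split; [rewrite /down Op k eqxx | rewrite -(only_child k (erefl _))].
Qed.

(* Cole-Vishkin colours *)
Fixpoint cvcol t v :=
  match t with
  | 0 => id v
  | t'.+1 => cvs (cvcol t' v + cvcol t' (par v)) (cvcol t' v) (cvcol t' (par v))
  end.

Lemma cv_proper t v : cvcol t v != cvcol t (par v).
Proof.
elim: t v => [|t IH] v /=.
  by apply/eqP => /idinj /eqP; rewrite eq_sym (negbTE (par_neq v)).
by apply: cvs_neq => //; apply: IH.
Qed.

Lemma cv_bound t v : cvcol t v <= Bnd b t.
Proof.
elim: t v => [|t IH] v /=.
  by rewrite /Bnd /=; have := idb v; lia.
change (cvs (cvcol t v + cvcol t (par v)) (cvcol t v) (cvcol t (par v)) <= hb (Bnd b t)).
apply: cvs_bound => //; apply: cv_proper.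
Qed.

Definition col v := cvcol (Lcv b) v.

Lemma col_le v : col v <= 5.
Proof. exact: leq_trans (cv_bound _ _) (Bnd_final b). Qed.

Lemma col_proper v : col v != col (par v).
Proof. exact: cv_proper. Qed.

Fixpoint misI j v :=
  match j with
  | 0 => false
  | j'.+1 => misI j' v || [&& col v == j', up v || down v,
              ~~ (up v && misI j' (par v)) & ~~ (down v && misI j' (child v))]
  end.

Lemma mis_mono j j' v : j <= j' -> misI j v -> misI j' v.
Proof.
move=> /subnKC <-; elim: (j' - j) => [|k IH]; first by rewrite addn0.
by rewrite addnS /= => h; rewrite IH.
Qed.

Lemma mis_indep j v : up v -> ~~ (misI j v && misI j (par v)).
Proof.
move=> uv; have [dp cp] := up_par uv.
have cpr := col_proper v.
elim: j => [|j IH] //=.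
rewrite uv dp cp /=.
case iv: (misI j v); case ip: (misI j (par v)); rewrite ?iv ?ip in IH => //=; rewrite ?andbF ?andbT ?orbF ?andbF //.
all: try by [].
apply/negP; case/andP => /andP [/eqP cv _] /and3P [/eqP cpj _ _].
by move: cpr; rewrite cv cpj eqxx.
Qed.

Definition I v := misI 6 v.

Lemma I_indep v : up v -> ~~ (I v && I (par v)).
Proof. exact: mis_indep. Qed.

Lemma I_max v : up v || down v -> ~~ I v ->
  (up v && I (par v)) || (down v && I (child v)).
Proof.
move=> nt nI.
have c5 := col_le v.
have h : ~~ misI (col v).+1 v.
  by apply: contra nI; apply: mis_mono.
move: h => /=; rewrite negb_or eqxx nt /= => /andP [_].
rewrite negb_and !negbK => /orP [] h; apply/orP; [left|right];
  case/andP: h => -> h /=; apply: mis_mono h; lia.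
Qed.

Definition cfin v := if Sn v then odd (rank v)
  else if up v || down v then I v else ~~ odd (rank (par v)).

Definition gi j k := if odd j then j.-1 else if j.+1 < k then j.+1 else j.-1.

Lemma gi_prop j k : 1 < k -> j < k ->
  gi j k < k /\ odd (gi j k) != odd j /\ ((j == (gi j k).+1) || (j == (gi j k).-1)).
Proof.
move=> k1; rewrite /gi.
case: j => [|i] jk.
  by rewrite /= k1.
have oS : odd i.+1 = ~~ odd i by [].
case oi: (odd i); rewrite oS oi /=.
  case: ifP => h /=.
    by rewrite oi /= eqxx orbT.
  case: i oi jk h oS => [|i] //= oi jk h _.
  by rewrite oi /= eqxx; split => //; lia.
by rewrite oi eqxx; split => //; lia.
Qed.

Definition fp v :=
  if Sn v then nth v (children (par v)) (gi (rank v) (K (par v)))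
  else if up v && (I (par v) != I v) then par v
  else if down v && (I (child v) != I v) then child v
  else par v.

Lemma rank_lt v : rank v < K (par v).
Proof. by rewrite /rank /K index_mem par_children. Qed.

Lemma fp_S v : Sn v -> let x := fp v in par x = par v /\ rank x = gi (rank v) (K (par v)).
Proof.
move=> Sv /=; rewrite /fp Sv.
have [glt _] := gi_prop Sv (rank_lt v).
have m : nth v (children (par v)) (gi (rank v) (K (par v))) \in children (par v)
  by apply: mem_nth.
split; first by apply/eqP; rewrite -mem_children.
by rewrite /rank (eqP (_ : par _ == par v)) -?mem_children // index_uniq // uniq_children.
Qed.

Lemma fp_col v : cfin (fp v) != cfin v.
Proof.
case Sv: (Sn v).
  have [p r] := fp_S Sv.
  have [_ [go _]] := gi_prop Sv (rank_lt v).
  have Sx : Sn (fp v) by rewrite /Sn p.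
  by rewrite /cfin Sx Sv r.
have Ov : ~~ Sn v by rewrite Sv.
case nt: (up v || down v).
- have upc : up v -> cfin (par v) = I (par v).
    move=> uv; have [dp _] := up_par uv.
    by move: (uv) => /andP [_ Op]; rewrite /cfin (negbTE Op) dp orbT.
  have dnc : down v -> cfin (child v) = I (child v).
    move=> dv; have [_ [Oc uc]] := down_child dv.
    by rewrite /cfin (negbTE Oc) uc.
  have cv : cfin v = I v by rewrite /cfin Sv nt.
  rewrite /fp Sv cv.
  case u1: (up v && (I (par v) != I v)).
    by case/andP: u1 => uv; rewrite upc.
  case d1: (down v && (I (child v) != I v)).
    by case/andP: d1 => dv; rewrite dnc.
  exfalso.
  case Iv: (I v).
  + case/orP: nt => [uv|dv].
    * have := I_indep uv; rewrite Iv /=; move: u1; rewrite uv Iv /= => /negbFE /eqP ->.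
      by [].
    * have [pc [_ uc]] := down_child dv.
      have := I_indep uc; rewrite pc Iv andbT.
      by move: d1; rewrite dv Iv /= => /negbFE /eqP ->.
  + have := I_max nt (negbT Iv).
    by case/orP => /andP [h1 h2]; [move: u1 | move: d1]; rewrite h1 h2 Iv.
- have nup : ~~ up v by move: nt => /norP [].
  have nd : ~~ down v by move: nt => /norP [].
  have Sp : Sn (par v) by move: nup; rewrite /up Ov /= negbK.
  by rewrite /fp Sv (negbTE nup) (negbTE nd) /= /cfin Sp Sv nt; case: (odd _).
Qed.

Definition cands x :=
  if Sn x then [:: nth x (children (par x)) (rank x).-1;
                   nth x (children (par x)) (rank x).+1; child x]
  else [:: par x; child x].

Lemma fp_pre v : v \in cands (fp v).
Proof.
case Sv: (Sn v).
  have [p r] := fp_S Sv.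
  have [_ [_ jj]] := gi_prop Sv (rank_lt v).
  have Sx : Sn (fp v) by rewrite /Sn p.
  rewrite /cands Sx p r !inE.
  have nv : v = nth (fp v) (children (par v)) (rank v) by rewrite nth_index // par_children.
  by case/orP: jj => /eqP <-; rewrite -nv eqxx ?orbT.
have Ov : ~~ Sn v by rewrite Sv.
have parcase : v \in cands (par v).
  have v1 := only_child (O_K Ov) (erefl _).
  by rewrite /cands; case: (Sn (par v)); rewrite !inE -v1 eqxx ?orbT.
rewrite /fp Sv.
case: ifP => _ //; case: ifP => // /andP [dv _].
have [pc [Oc _]] := down_child dv.
by rewrite /cands (negbTE Oc) pc !inE eqxx.
Qed.

Lemma fiber3 x : #|[set v | fp v == x]| <= 3.
Proof.
apply: leq_trans (_ : #|cands x| <= 3).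
  apply: subset_leq_card; apply/subsetP => v; rewrite inE => /eqP <-.
  exact: fp_pre.
apply: leq_trans (card_size _) _; rewrite /cands; by case: (Sn x).
Qed.

Lemma balanced_c (c : bool) :
  4 * #|[set v | cfin v == c]| <= 3 * #|T|.
Proof.
have h : #|[set v | cfin v == c]| <= 3 * #|[set v | cfin v == ~~ c]|.
  apply: (count3 (g := fp)).
    move=> v; rewrite !inE => /eqP <-.
    by case: (cfin v) (fp_col v); case: (cfin (fp v)).
  move=> x; apply: leq_trans (fiber3 x); apply: subset_leq_card.
  by apply/subsetP => v; rewrite !inE => /andP [].
have s : #|[set v | cfin v == c]| + #|[set v | cfin v == ~~ c]| = #|T|.
  rewrite -(cardsC [set v | cfin v == c]); congr (_ + _).
  by apply: eq_card => v; rewrite !inE; case: (cfin v); destruct c.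
lia.
Qed.

Definition mflags v := [seq nat_of_bool (par u == v) | u <- nb v].

Definition mst r v :=
  mkSt r (if 0 < r then mflags v else [::]) ((1 < r) && Sn v) ((1 < r) && odd (rank v))
    ((2 < r) && ~~ Sn (par v)) ((2 < r) && odd (rank (par v)))
    (cvcol (minn (r - 3) (Lcv b)) v) (misI (r - 3 - Lcv b) v).

Lemma nb_nonnil v : 0 < size (nb v).
Proof. have [u hu] := enz v; rewrite -mem_nb in hu; by case: (nb v) hu. Qed.

Lemma nb_sym u v : u \in nb v -> v \in nb u.
Proof. by rewrite !mem_nb esym. Qed.

Lemma index0 u v : (index v (nb u) == 0) = (par u == v).
Proof. by rewrite /par; have := nb_nonnil u; case: (nb u) => //= x s _; rewrite /index /=; case: (x == v). Qed.

Lemma count_mflags x : count (pred1 1) (mflags x) = K x.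
Proof.
rewrite /mflags count_map /K /children size_filter; apply: eq_count => u /=.
by case: (par u == x).
Qed.

Lemma count_take_index (s : seq T) (P : pred T) v : P v ->
  count P (take (index v s) s) = index v (filter P s).
Proof.
move=> Pv; elim: s => [|w s IH] //=.
rewrite /index /=.
case: (w =P v) => [->|ne] /=; first by rewrite Pv /= eqxx.
case Pw: (P w) => /=; rewrite -/(index v s) IH //.
by case: (w =P v) => // e1; case: ne.
Qed.

Lemma rank_count v :
  count (pred1 1) (take (index v (nb (par v))) (mflags (par v))) = rank v.
Proof.
rewrite /mflags -map_take count_map /rank /children -count_take_index //.
by apply: eq_count => u /=; case: (par u == par v).
Qed.

Lemma index_mflags v : index 1 (mflags v) = find (fun u => par u == v) (nb v).
Proof.
rewrite /index /mflags find_map; apply: eq_find => u /=.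
by case: (par u == v).
Qed.

Lemma msg0 (f : T -> nat) v : nth 0 [seq f u | u <- nb v] 0 = f (par v).
Proof. by rewrite (nth_map v) ?nb_nonnil // nth0. Qed.

Lemma msg_child (f : T -> nat) v : down v ->
  nth 0 [seq f u | u <- nb v] (index 1 (mflags v)) = f (child v).
Proof.
case/andP=> _ /eqP Kv; rewrite index_mflags (nth_map v) //.
rewrite -has_find has_count -size_filter; by rewrite -/(children v) -/(K v) Kv.
Qed.

Lemma half_bit (a : bool) n : (nat_of_bool a + n.*2)./2 = n.
Proof. exact: half_bit_double. Qed.

Lemma odd_bit (a : bool) n : odd (nat_of_bool a + n.*2) = a.
Proof. by rewrite oddD odd_double addbF; case: a. Qed.

Lemma exec_mst r v : exec (alg b) e id r v = mst r v.
Proof.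
elim: r v => [|r IH] v; first by [].
rewrite /= IH.
have -> : [seq ca_send (exec (alg b) e id r u) (index v (nbrs e u)) | u <- nbrs e v]
    = [seq a_send (Lcv b) (mst r u) (index v (nb u)) | u <- nb v].
  by apply: eq_map => u; rewrite IH.
rewrite /= /a_recv.
case: r IH => [|[|[|k]]] IH.
- rewrite /mst /=; congr mkSt.
  rewrite /mflags /a_send /=; apply/eq_in_map => u hu /=.
  by rewrite index0.
- rewrite /mst /= msg0 /a_send /= count_mflags rank_count odd_bit half_bit.
  by case: (odd (rank v)).
- rewrite /mst /= msg0 /a_send /= odd_bit half_bit.
  by case: (odd (rank (par v))); case: (Sn (par v)).
- rewrite /mst /=.
  set L := Lcv b.
  have e3 : k.+3 - 3 = k by rewrite subSS subSS subSS subn0.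
  have e4 : k.+4 - 3 = k.+1 by rewrite subSS subSS subSS subn0.
  rewrite msg0 /a_send /= e3 e4.
  case: ifP => kL.
    have -> : minn k L = k by apply/minn_idPl; exact: ltnW.
    have -> : minn k.+1 L = k.+1 by apply/minn_idPl.
    have -> : k - L = 0 by apply/eqP; rewrite subn_eq0 ltnW.
    have -> : k.+1 - L = 0 by apply/eqP; rewrite subn_eq0.
    by rewrite kL.
  have kL' : L <= k by rewrite leqNgt kL.
  have -> : minn k L = L by apply/minn_idPr.
  have -> : minn k.+1 L = L by apply/minn_idPr; exact: leqW.
  rewrite kL; congr mkSt.
  have -> : k.+1 - L = (k - L).+1 by rewrite subSn.
  rewrite /= /upb /downb /= count_mflags -/(up v) -/(down v) -/(col v).
  congr (_ || _); congr [&& _, _, _ & _].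
    by case: (misI _ _).
  case dv: (down v) => //=.
  by rewrite (msg_child (fun u => nat_of_bool (misI (k - L) u))) //; case: (misI _ _).
Qed.

Lemma color_ok v : color_of (alg b) e id v = cfin v.
Proof.
rewrite /color_of exec_mst /= /a_out /mst /=.
have -> : (Lcv b + 9) - 3 - Lcv b = 6 by lia.
by rewrite /upb /downb /= count_mflags.
Qed.

Lemma bw_ok : bandwidth_ok (alg b) e id (12 * b + 12).
Proof.
move=> r u v rlt euv; rewrite exec_mst /= /a_send /mst /=.
have big : 4 <= 2 ^ (12 * b + 12).
  by apply: leq_trans (_ : 2 ^ 2 <= _) => //; rewrite leq_exp2l //; lia.
case: r rlt => [|[|[|k]]] rlt /=.
- by case: (_ == 0); apply: leq_trans big.
- apply: leq_trans big; by case: (1 < _); case: (odd _).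
- apply: leq_trans big; by case: (~~ _); case: (odd _).
case: ifP => _; last by case: (misI _ _); apply: leq_trans big.
apply: leq_ltn_trans (cv_bound _ _) _.
have [h _] := Bnd_le b (minn (k.+3 - 3) (Lcv b)).
apply: leq_ltn_trans h _.
rewrite expnD.
have : 2 ^ b <= 2 ^ (12 * b) by rewrite leq_exp2l //; lia.
have : 0 < 2 ^ b by rewrite expn_gt0.
have -> : 2 ^ 12 = 4096 by [].
lia.
Qed.

Lemma main_graph : bandwidth_ok (alg b) e id (12 * b + 12) /\
  4 * #|[set v | color_of (alg b) e id v]| <= 3 * #|T| /\
  4 * #|[set v | ~~ color_of (alg b) e id v]| <= 3 * #|T|.
Proof.
split; first exact: bw_ok.
split.
- have := balanced_c true; congr (_ <= _); congr (_ * _); apply: eq_card => v.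
  by rewrite !inE color_ok eqb_id.
- have := balanced_c false; congr (_ <= _); congr (_ * _); apply: eq_card => v.
  by rewrite !inE color_ok eqbF_neg.
Qed.

End Graph.

Theorem lemma3p1 :
  exists (c : nat) (A : nat -> congest_algo),
    forall b : nat,
      ca_rounds (A b) <= c * log_star b + c /\
      forall (T : finType) (e : rel T) (id : T -> nat),
        symmetric e -> irreflexive e ->
        (forall v : T, exists u : T, e v u) ->
        injective id -> (forall v : T, id v < 2 ^ b) ->
        bandwidth_ok (A b) e id (c * b + c) /\
        4 * #|[set v | color_of (A b) e id v]| <= 3 * #|T| /\
        4 * #|[set v | ~~ color_of (A b) e id v]| <= 3 * #|T|.
Proof.
exists 12, alg => b; split.
  rewrite /= /Lcv; lia.
move=> T e id esym eirr enz idinj idb.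
exact: main_graph.
Qed.
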